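(* Let $d\ge2$ and $a\in\mathbb{Z}_n^*$. Then: (1) if $a\ne1$, then $|\mathrm{Fix}(a,\mathcal{Y}_{\mathrm{gen}})|\le n^{d-1}$; (2) if $a^2\ne1$, then $|\mathrm{Fix}(a,\mathcal{Y}_{\mathrm{gen}})|\le n^{d-2}$.
   Context: $\mathcal{Y}_{\mathrm{gen}}$ is the set of $d$-element subsets of $\mathbb{Z}_n$ that generate $\mathbb{Z}_n$. The unit group $\mathbb{Z}_n^*$ acts on it by $A\mapsto aA=\{ax:x\in A\}$, and $\mathrm{Fix}(a,\mathcal{Y}_{\mathrm{gen}})=\{A\in\mathcal{Y}_{\mathrm{gen}}:aA=A\}$. *)

(* Defs.v *)
From HB Require Import structures.
From mathcomp Require Import all_boot all_order all_algebra all_fingroup.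
Set Implicit Arguments. Unset Strict Implicit. Unset Printing Implicit Defensive.
Import GRing.Theory.

Definition scale_set (n : nat) (a : 'Z_n) (A : {set 'Z_n}) : {set 'Z_n} :=
  [set (a * x)%R | x in A].

Definition Ygen (n d : nat) : {set {set 'Z_n}} :=
  [set A : {set 'Z_n} | (#|A| == d) && (<<A>>%g == [set: 'Z_n])].

Definition FixYgen (n d : nat) (a : 'Z_n) : {set {set 'Z_n}} :=
  [set A in Ygen n d | scale_set a A == A].

(* Main.v *)
Require Import Defs.
From HB Require Import structures.
From mathcomp Require Import all_boot all_order all_algebra all_fingroup.
From mathcomp Require Import zify.
Import GRing.Theory.

Lemma gen_fix (n : nat) (b : 'Z_n) (A : {set 'Z_n}) :
  (1 < n)%N -> <<A>>%g = [set: 'Z_n] -> (forall x, x \in A -> (b * x)%R = x) ->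
  b = 1%R.
Proof.
move=> n1 gA H.
have gH : group_set [set x : 'Z_n | (b * x)%R == x].
  apply/group_setP; split; first by rewrite inE /= mulr0.
  move=> x y; rewrite !inE => /eqP hx /eqP hy.
  by change ((b * (x + y))%R == (x + y)%R); rewrite mulrDr hx hy.
have : <<A>>%g \subset Group gH.
  by rewrite gen_subG; apply/subsetP => x xA; rewrite inE H.
rewrite gA => /subsetP/(_ 1%R (in_setT _)); rewrite inE mulr1 => /eqP //.
Qed.
Lemma enc_bound (T : finType) (x0 : T) (d m : nat) (F : {set {set T}})
  (orb : T -> {set T}) :
  (forall A, A \in F -> #|A| = d) ->
  (forall A, A \in F -> exists2 x, orb x \subset A & #|orb x| = m) ->
  (#|F| <= #|T| ^ (d.+1 - m))%N.
Proof.
move=> Hd Hex.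
have [->|[A0 HA0]] := set_0Vmem F; first by rewrite cards0.
have md : (m <= d)%N.
  have [x sx cx] := Hex A0 HA0; rewrite -cx -(Hd A0 HA0); exact: subset_leq_card.
set k := (d.+1 - m)%N.
pose px (A : {set T}) := odflt x0 [pick x | (orb x \subset A) && (#|orb x| == m)].
have pxP : forall A, A \in F -> orb (px A) \subset A /\ #|orb (px A)| = m.
  move=> A HA; rewrite /px; case: pickP => [x /andP[s /eqP c] | H] //=.
  have [x s c] := Hex A HA; move: (H x); by rewrite s c eqxx.
pose enc (A : {set T}) := px A :: enum (A :\: orb (px A)).
have sz : forall A, A \in F -> size (enc A) == k.
  move=> A HA; have [s c] := pxP A HA.
  rewrite /= -cardE cardsD (setIidPr s) c Hd //; apply/eqP; rewrite /k; lia.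
pose g (A : {set T}) : k.-tuple T := insubd (nseq_tuple k x0) (enc A).
have rec : forall A, A \in F -> A = orb (head x0 (enc A)) :|: [set x in behead (enc A)].
  move=> A HA; have [s c] := pxP A HA; rewrite /= set_enum.
  by rewrite -{1}(setID A (orb (px A))) (setIidPr s).
have inj : {in F &, injective g}.
  move=> A B HA HB eq.
  have e : enc A = enc B by move: (congr1 val eq); rewrite !val_insubd sz // sz.
  by rewrite (rec A HA) (rec B HB) e.
rewrite -(card_in_imset inj) -card_tuple; exact: max_card.
Qed.

Lemma scale_mem (n : nat) (a : 'Z_n) (A : {set 'Z_n}) x :
  scale_set a A == A -> x \in A -> (a * x)%R \in A.
Proof. by move=> /eqP e xA; rewrite -e; apply: imset_f. Qed.

Theorem lemma5p3 (n d : nat) (a : 'Z_n) :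
  (1 < n)%N -> (2 <= d)%N -> a \is a GRing.unit ->
  (a != 1%R -> (#|FixYgen d a| <= n ^ d.-1)%N) /\
  ((a * a)%R != 1%R -> (#|FixYgen d a| <= n ^ (d - 2))%N).
Proof.
move=> n1 d2 ua.
have cT : #|'Z_n| = n by rewrite card_ord Zp_cast.
have memF : forall A, A \in FixYgen d a ->
   [/\ #|A| = d, <<A>>%g = [set: 'Z_n] & scale_set a A == A].
  move=> A; rewrite !inE => /andP[/andP[/eqP c /eqP g] s]; by split.
split=> ha.
- have -> : d.-1 = (d.+1 - 2)%N by lia.
  rewrite -[X in (_ <= X ^ _)%N]cT; apply: (@enc_bound ('Z_n : finType) 0%R _ _ _ (fun x => [set x; (a * x)%R])).
    by move=> A /memF[].
  move=> A /memF[c g s].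
  have [x xA hx] : exists2 x, x \in A & (a * x)%R != x.
    case: (pickP [pred x in A | (a * x)%R != x]) => [x /andP[xA hx]|H].
      by exists x.
    case/eqP: ha; apply: (@gen_fix n a A n1 g) => x xA; apply/eqP.
    by move: (H x); rewrite /= xA /= => /negbFE.
  exists x; last by rewrite cards2 eq_sym hx.
  by apply/subsetP => y; rewrite !inE => /orP[]/eqP ->; rewrite ?scale_mem.
- have -> : (d - 2 = d.+1 - 3)%N by lia.
  rewrite -[X in (_ <= X ^ _)%N]cT; apply: (@enc_bound ('Z_n : finType) 0%R _ _ _
     (fun x => (x |: [set (a * x)%R; (a * (a * x))%R]))).
    by move=> A /memF[].
  move=> A /memF[c g s].
  have [x xA hx] : exists2 x, x \in A & (a * (a * x))%R != x.
    case: (pickP [pred x in A | (a * (a * x))%R != x]) => [x /andP[xA hx]|H].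
      by exists x.
    case/eqP: ha; apply: (@gen_fix n (a * a)%R A n1 g) => x xA; apply/eqP; rewrite -mulrA.
    by move: (H x); rewrite /= xA /= => /negbFE.
  have h1 : (a * x)%R != x.
    by apply: contra hx => /eqP e; rewrite e e.
  have h2 : (a * (a * x))%R != (a * x)%R.
    by apply: contra h1 => /eqP/(mulrI ua) ->.
  exists x.
    apply/subsetP => y; rewrite !inE => /orP[/eqP ->|/orP[]/eqP ->] //;
      by rewrite ?scale_mem.
  rewrite cardsU1 cards2 !inE negb_or (eq_sym x) h1 (eq_sym x) hx (eq_sym (a * x)%R) h2.
  done.
Qed.
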